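(* For a $K\times N$ multicast switch with a given traffic pattern, if a rate vector $\mathbf r$ is admissible, then its enhanced rate vector $\mathbf e(\mathbf r)$ lies in $QSTAB(G)$, where $G$ is the enhanced conflict graph; i.e. $\mathbf e(\mathbf r)$ is nonnegative and satisfies all clique inequalities of $G$.
   Context: A flow is a pair $(i,J)$ with input $i\in[K]$ and nonempty fanout $J\subseteq[N]$; a traffic pattern is a finite set of flows; a rate vector assigns $r_{iJ}\ge0$ to each flow. Subflows: $(i,J,j)$ with $j\in J$. $\mathbf r$ is admissible if $\mathbf r\ge0$, for each input $i$ the sum of $r_{iJ}$ over flows from $i$ is at most 1, and for each output $j$ the sum of $r_{iJ}$ over flows with $j\in J$ is at most 1. Enhanced rate vector: $\mathbf e(\mathbf r)_{iJj}=r_{iJ}$. Enhanced conflict graph $G$: one vertex per subflow; distinct $(i,J,j),(i',J',j')$ adjacent iff $j=j'$, or $i=i'$ and $J\ne J'$. $QSTAB(G)=\{x\ge0:\sum_{v\in Q}x_v\le1 \text{ for every clique } Q\}$. *)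

(* Defs.v *)
From mathcomp Require Import all_boot all_order all_algebra.
Set Implicit Arguments. Unset Strict Implicit. Unset Printing Implicit Defensive.
Import Order.TTheory GRing.Theory Num.Theory.
Local Open Scope ring_scope.

(* A K x N multicast switch: inputs 'I_K, outputs 'I_N. *)
Definition flow (K N : nat) := ('I_K * {set 'I_N})%type.
Definition subflow (K N : nat) := ('I_K * {set 'I_N} * 'I_N)%type.

Definition traffic_pattern (K N : nat) (F : {set flow K N}) : Prop :=
  forall f, f \in F -> f.2 != set0.

Definition admissible (R : realFieldType) (K N : nat) (F : {set flow K N})
    (r : flow K N -> R) : Prop :=
  [/\ forall f, f \in F -> 0 <= r f,
      forall i : 'I_K, \sum_(f in F | f.1 == i) r f <= 1
    & forall j : 'I_N, \sum_(f in F | j \in f.2) r f <= 1].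

(* Vertices of the enhanced conflict graph: the subflows (i,J,j), j in J. *)
Definition subflows (K N : nat) (F : {set flow K N}) : {set subflow K N} :=
  [set v : subflow K N | ((v.1.1, v.1.2) \in F) && (v.2 \in v.1.2)].

Definition enhanced (R : realFieldType) (K N : nat) (r : flow K N -> R)
    (v : subflow K N) : R := r (v.1.1, v.1.2).

Definition ecg_adj (K N : nat) (u v : subflow K N) : bool :=
  (u != v) && ((u.2 == v.2) || ((u.1.1 == v.1.1) && (u.1.2 != v.1.2))).

Definition is_clique (K N : nat) (F : {set flow K N}) (Q : {set subflow K N}) : Prop :=
  Q \subset subflows F /\
  (forall u v, u \in Q -> v \in Q -> u != v -> ecg_adj u v).

Definition in_QSTAB (R : realFieldType) (K N : nat) (F : {set flow K N})
    (x : subflow K N -> R) : Prop :=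
  (forall v, v \in subflows F -> 0 <= x v) /\
  (forall Q, is_clique F Q -> \sum_(v in Q) x v <= 1).

(* Main.v *)
Require Import Defs.
From mathcomp Require Import all_boot all_order all_algebra.
Set Implicit Arguments. Unset Strict Implicit. Unset Printing Implicit Defensive.
Import Order.TTheory GRing.Theory Num.Theory.
Local Open Scope ring_scope.

Lemma sub_sum (R : realFieldType) (T : finType) (F S : {set T}) (P : pred T) (r : T -> R) :
  (forall f, f \in S -> (f \in F) && P f) -> (forall f, f \in F -> 0 <= r f) ->
  \sum_(f in S) r f <= \sum_(f in F | P f) r f.
Proof.
move=> HS H0; rewrite [X in _ <= X](bigID (mem S)) /=.
have -> : \sum_(i | (i \in F) && P i && (i \in S)) r i = \sum_(f in S) r f.
  apply: eq_bigl => f; case fS: (f \in S); last by rewrite andbF.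
  by rewrite ssrbool.andbT; apply: HS.
rewrite lerDl; apply: sumr_ge0 => f /andP [/andP [fF _] _]; exact: H0.
Qed.

Lemma clique_inj (K N : nat) (F : {set flow K N}) (Q : {set subflow K N}) :
  is_clique F Q -> {in Q &, injective (fun v : subflow K N => v.1)}.
Proof.
move=> [_ HQ] x y xQ yQ /= exy; apply/eqP; apply/negPn/negP => nxy.
have := HQ x y xQ yQ nxy; rewrite /ecg_adj nxy /= exy !eqxx /= orbF => /eqP e2.
by move/eqP: nxy; apply; case: x y exy e2 {xQ yQ} => [x1 x2] [y1 y2] /= -> ->.
Qed.

Theorem theorem5 (R : realFieldType) (K N : nat) (F : {set flow K N})
    (r : flow K N -> R) :
  traffic_pattern F -> admissible F r -> in_QSTAB F (enhanced r).
Proof.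
move=> _ [H0 Hin Hout]; split.
  by move=> [[i J] j]; rewrite inE /= => /andP [fF _]; rewrite /enhanced /=; apply: H0.
move=> Q HQ; have Hinj := clique_inj HQ.
have [Qsub Hadj] := HQ.
have HQF : forall v, v \in Q -> (v.1 \in F) && (v.2 \in v.1.2).
  move=> [[i J] j] vQ; have := subsetP Qsub _ vQ; by rewrite inE.
have -> : \sum_(v in Q) enhanced r v = \sum_(f in [set v.1 | v in Q]) r f.
  rewrite big_imset //=; apply: eq_bigr => [[[i J] j]] _; by [].
case: (boolP [exists u in Q, exists v in Q, u.2 != v.2]).
- case/existsP => u /andP [uQ /existsP [v /andP [vQ nuv]]].
  have nuv' : u != v by apply: contraNneq nuv => ->.
  have := Hadj u v uQ vQ nuv'; rewrite /ecg_adj nuv' /= (negbTE nuv) /= => /andP [/eqP e1 _].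
  apply: le_trans (Hin u.1.1).
  apply: sub_sum => [f /imsetP [w wQ ->]|]; last exact: H0.
  rewrite (proj1 (andP (HQF w wQ))) /=; apply/negPn/negP => nw.
  have nwu : w != u by apply: contraNneq nw => ->.
  have nwv : w != v by apply: contraNneq nw => ->; rewrite e1.
  have := Hadj w u wQ uQ nwu; rewrite /ecg_adj nwu (negbTE nw) /= orbF => /eqP ewu.
  have := Hadj w v wQ vQ nwv; rewrite /ecg_adj nwv -e1 (negbTE nw) /= orbF => /eqP ewv.
  by move/eqP: nuv; apply; rewrite -ewu ewv.
- rewrite negb_exists => /forallP Hall.
  case: (set_0Vmem Q) => [->|[v0 v0Q]].
    by rewrite imset0 big_set0 ler01.
  apply: le_trans (Hout v0.2).
  apply: sub_sum => [f /imsetP [w wQ ->]|]; last exact: H0.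
  have := Hall w; rewrite wQ /= negb_exists => /forallP /(_ v0); rewrite v0Q /= negbK => /eqP <-.
  exact: HQF.
Qed.
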